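(* Let $J'=(z_w,z_w')$ be a nonempty open interval, let $r:J'\to\mathbb{R}$ be differentiable and non-increasing, and let $h:J'\to\mathbb{R}$ be differentiable with $\dot h(z)=1+h(z)^2-2r(z)h(z)$ on $J'$, having exactly one zero $z_*\in J'$. Consider Newton's iteration $z_{n+1}=N(z_n)$ with $N(z)=z-\dfrac{h(z)}{1+h(z)^2-2r(z)h(z)}$. (1) If $r(z)>0$ for all $z\in(z_w,z_* )$, then for every $z_0\in(z_w,z_* )$ the iterates are well defined and $(z_n)$ increases monotonically to $z_*$. (2) If $r(z)<0$ for all $z\in(z_*,z_w')$, then for every $z_0\in(z_*,z_w')$ the iterates are well defined and $(z_n)$ decreases monotonically to $z_*$.
   Context: $\dot{}$ denotes differentiation with respect to $z$. Here $h<0$ on $(z_w,z_* )$ and $h>0$ on $(z_*,z_w')$. *)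

(* Defs.v *)
From Stdlib Require Import Reals.
From Coquelicot Require Import Coquelicot.
Open Scope R_scope.

Definition in_oint (a b : Rbar) (z : R) : Prop := Rbar_lt a z /\ Rbar_lt z b.

Definition newton_den (r h : R -> R) (z : R) : R := 1 + (h z)^2 - 2 * r z * h z.

Definition newton_map (r h : R -> R) (z : R) : R := z - h z / newton_den r h z.

Fixpoint newton_iter (r h : R -> R) (z0 : R) (n : nat) : R :=
  match n with
  | O => z0
  | S m => newton_map r h (newton_iter r h z0 m)
  end.

(* Main.v *)
Require Import Defs.
From Stdlib Require Import Reals Lra Psatz Classical.
From Coquelicot Require Import Coquelicot.
Open Scope R_scope.

Lemma cont_of_der f x l : is_derive f x l -> continuity_pt f x.
Proof.
  intro H. apply is_derive_Reals in H.
  apply derivable_continuous_pt. exact (exist _ l H).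
Qed.

Lemma mono f df a b : a <= b -> (forall x, a <= x <= b -> is_derive f x (df x)) ->
  (forall x, a <= x <= b -> 0 <= df x) -> f a <= f b.
Proof.
  intros Hab Hd Hp.
  pose proof (MVT_gen f a b df) as M. cbv zeta in M.
  rewrite Rmin_left, Rmax_right in M by lra.
  destruct M as [c [Hc E]].
  - intros x Hx. apply Hd. lra.
  - intros x Hx. apply (cont_of_der f x (df x)). apply Hd. lra.
  - pose proof (Hp c Hc). nra.
Qed.

Lemma in_between (a b : Rbar) x y t : in_oint a b x -> in_oint a b y -> x <= t <= y -> in_oint a b t.
Proof.
  unfold in_oint. destruct a as [a| |], b as [b| |]; simpl; intros; lra.
Qed.

Lemma h_sign (zw zw' : Rbar) (r h : R -> R) (zs : R) :
  (forall z, in_oint zw zw' z -> is_derive h z (1 + (h z)^2 - 2 * r z * h z)) ->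
  in_oint zw zw' zs -> h zs = 0 ->
  (forall z, in_oint zw zw' z -> h z = 0 -> z = zs) ->
  forall z, in_oint zw zw' z -> (z < zs -> h z < 0) /\ (zs < z -> 0 < h z).
Proof.
  intros Hd Hzs H0 Hu.
  assert (D1 : derivable_pt_lim h zs 1).
  { apply is_derive_Reals. pose proof (Hd zs Hzs) as E. rewrite H0 in E.
    replace 1 with (1 + 0 ^ 2 - 2 * r zs * 0) by ring. exact E. }
  destruct (D1 (/2) ltac:(lra)) as [delta Hdel].
  assert (Hk : forall k, k <> 0 -> Rabs k < delta -> (k < 0 -> h (zs + k) < 0) /\ (0 < k -> 0 < h (zs+k))).
  { intros k kn ka. specialize (Hdel k kn ka). rewrite H0 in Hdel.
    set (q := (h (zs + k) - 0) / k) in Hdel.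
    assert (Eq : h (zs + k) = q * k) by (unfold q; field; auto).
    apply Rabs_def2 in Hdel. rewrite Eq. split; intros; nra. }
  assert (dp := cond_pos delta).
  assert (Hc : forall a b, in_oint zw zw' a -> in_oint zw zw' b -> forall t, a <= t <= b -> continuity_pt (fun t => - h t) t).
  { intros a b Ha Hb t Ht. apply (cont_of_der _ t (- (1 + (h t)^2 - 2 * r t * h t))).
    apply (is_derive_opp h). apply Hd. eapply in_between; [exact Ha|exact Hb|exact Ht]. }
  intros z Hz. split; intro Hlt.
  - destruct (Rtotal_order (h z) 0) as [?|[E|Hpos]]; [assumption| |].
    + apply Hu in E; [lra|assumption].
    + exfalso. set (k := Rmax (-(delta/2)) ((z - zs)/2)).
      assert (k1 : k < 0) by (unfold k; apply Rmax_lub_lt; lra).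
      assert (k2 : -(delta/2) <= k) by apply Rmax_l.
      assert (k3 : (z - zs)/2 <= k) by apply Rmax_r.
      destruct (Hk k ltac:(lra) ltac:(rewrite Rabs_left; lra)) as [Hn _].
      specialize (Hn k1).
      assert (Hin : in_oint zw zw' (zs + k)) by (eapply in_between; [exact Hz|exact Hzs|lra]).
      destruct (Ranalysis5.IVT_interv (fun t => - h t) z (zs + k)) as [y [Hy Ey]].
      * apply (Hc z (zs+k) Hz Hin).
      * lra.
      * lra.
      * lra.
      * assert (h y = 0) by lra. apply Hu in H; [lra|]. eapply in_between; [exact Hz|exact Hin|lra].
  - destruct (Rtotal_order (h z) 0) as [Hneg|[E|?]]; [|  |assumption].
    + exfalso. set (k := Rmin (delta/2) ((z - zs)/2)).
      assert (k1 : 0 < k) by (unfold k; apply Rmin_glb_lt; lra).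
      assert (k2 : k <= delta/2) by apply Rmin_l.
      assert (k3 : k <= (z - zs)/2) by apply Rmin_r.
      destruct (Hk k ltac:(lra) ltac:(rewrite Rabs_right; lra)) as [_ Hp].
      specialize (Hp k1).
      assert (Hin : in_oint zw zw' (zs + k)) by (eapply in_between; [exact Hzs|exact Hz|lra]).
      destruct (Ranalysis5.IVT_interv (fun t => - h t) (zs + k) z) as [y [Hy Ey]].
      * apply (Hc (zs+k) z Hin Hz).
      * lra.
      * lra.
      * lra.
      * assert (h y = 0) by lra. apply Hu in H; [lra|]. eapply in_between; [exact Hin|exact Hz|lra].
    + apply Hu in E; [lra|assumption].
Qed.

Lemma seq_mono (u : nat -> R) : (forall n, u n <= u (S n)) -> forall N n, (N <= n)%nat -> u N <= u n.
Proof.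
  intros H N n Hn. induction Hn; [lra|]. specialize (H m). lra.
Qed.

Lemma core (zw zw' : Rbar) (r h : R -> R) (zs : R) :
  (forall x y, in_oint zw zw' x -> in_oint zw zw' y -> x <= y -> r y <= r x) ->
  (forall z, in_oint zw zw' z -> is_derive h z (1 + (h z)^2 - 2 * r z * h z)) ->
  in_oint zw zw' zs -> h zs = 0 ->
  (forall z : R, Rbar_lt zw z -> z < zs -> h z < 0) ->
  (forall z : R, Rbar_lt zw z -> z < zs -> 0 < r z) ->
  forall z0 : R, Rbar_lt zw z0 -> z0 < zs ->
     (forall n, in_oint zw zw' (newton_iter r h z0 n)
                /\ newton_den r h (newton_iter r h z0 n) <> 0) /\
     (forall n, newton_iter r h z0 n <= newton_iter r h z0 (S n)) /\
     is_lim_seq (newton_iter r h z0) zs.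
Proof.
  intros Hm Hd Hzs H0 Hneg Hr z0 Hz0 Hz0s.
  set (D := newton_den r h).
  set (P := fun z : R => Rbar_lt zw z /\ z <= zs).
  assert (Pin : forall z, P z -> in_oint zw zw' z).
  { intros z [Hz Hz']. split; [exact Hz|].
    destruct Hzs as [_ Hb]. destruct zw' as [b| |]; simpl in *; auto; lra. }
  assert (Dge1 : forall z, P z -> 1 <= D z).
  { intros z [Hz Hz']. unfold D, newton_den. destruct (Req_dec z zs) as [->|ne].
    - rewrite H0. lra.
    - pose proof (Hneg z Hz ltac:(lra)). pose proof (Hr z Hz ltac:(lra)). nra. }
  assert (Hder : forall z, P z -> is_derive h z (D z)).
  { intros z Hz. apply Hd, Pin, Hz. }
  assert (PI : forall x y t, P x -> P y -> x <= t <= y -> P t).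
  { intros x y w [Hx _] [_ Hy] Ht. split; [|lra].
    destruct zw as [a| |]; simpl in *; auto; lra. }
  assert (hmono : forall x y, P x -> P y -> x <= y -> h x <= h y).
  { intros x y Px Py Hxy. apply (mono h D x y Hxy).
    - intros t Ht. apply Hder. exact (PI x y t Px Py Ht).
    - intros t Ht. pose proof (Dge1 t (PI x y t Px Py Ht)). lra. }
  assert (Dmono : forall x y, P x -> P y -> x <= y -> D y <= D x).
  { intros x y Px Py Hxy. destruct (Req_dec y zs) as [->|ne].
    - pose proof (Dge1 x Px). assert (D zs = 1) by (unfold D, newton_den; rewrite H0; ring). lra.
    - destruct Px as [Px1 Px2], Py as [Py1 Py2].
      pose proof (hmono x y (conj Px1 Px2) (conj Py1 Py2) Hxy).
      pose proof (Hneg y Py1 ltac:(lra)).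
      pose proof (Hr y Py1 ltac:(lra)).
      pose proof (Hm x y (Pin x (conj Px1 Px2)) (Pin y (conj Py1 Py2)) Hxy).
      unfold D, newton_den. nra. }
  assert (step : forall z, P z -> P (newton_map r h z) /\ z <= newton_map r h z).
  { intros z Pz. destruct (Req_dec z zs) as [->|ne].
    - unfold newton_map. rewrite H0. unfold Rdiv. rewrite Rmult_0_l, Rminus_0_r. split; [exact Pz|lra].
    - destruct Pz as [Pz1 Pz2].
      assert (hz := Hneg z Pz1 ltac:(lra)).
      assert (Dz := Dge1 z (conj Pz1 Pz2)).
      assert (ge : z <= newton_map r h z).
      { unfold newton_map. fold D. assert (0 < / D z) by (apply Rinv_0_lt_compat; lra).
        unfold Rdiv. nra. }
      assert (le : newton_map r h z <= zs).
      { assert (M : D z * z - h z <= D z * zs - h zs).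
        { apply (mono (fun w => D z * w - h w) (fun w => D z * 1 - D w) z zs); [lra| |].
          - intros t Ht. apply (is_derive_minus (fun w => D z * w) h t (D z * 1) (D t)).
            + apply is_derive_scal; exact (@is_derive_id R_AbsRing t).
            + apply Hder. eapply PI; [exact (conj Pz1 Pz2)| |exact Ht]. split; [|lra].
              destruct Hzs; assumption.
          - intros t Ht. assert (Pt : P t).
            { eapply PI; [exact (conj Pz1 Pz2)| |exact Ht]. split; [|lra]. destruct Hzs; assumption. }
            pose proof (Dmono z t (conj Pz1 Pz2) Pt ltac:(lra)). lra. }
        rewrite H0 in M. unfold newton_map. fold D.
        assert (0 < / D z) by (apply Rinv_0_lt_compat; lra).
        assert (D z * / D z = 1) by (apply Rinv_r; lra).
        unfold Rdiv. nra. }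
      split; [split|]; try lra.
      destruct zw as [a| |]; simpl in *; auto; lra. }
  set (u := newton_iter r h z0).
  assert (Pu : forall n, P (u n)).
  { induction n as [|n IH]. - split; [exact Hz0|unfold u; simpl; lra]. - apply (step _ IH). }
  assert (inc : forall n, u n <= u (S n)). { intro n. apply (step _ (Pu n)). }
  split; [|split; [exact inc|]].
  { intro n. split; [apply Pin, Pu|]. pose proof (Dge1 _ (Pu n)). fold D. lra. }
  apply is_lim_seq_spec. intros eps. simpl.
  assert (ep := cond_pos eps).
  assert (Hex : exists N, zs - eps < u N).
  { apply NNPP. intro Hno.
    assert (Hall : forall n, u n <= zs - eps).
    { intro n. apply Rnot_lt_le. intro. apply Hno. exists n. assumption. }
    set (c := Rmax z0 (zs - eps/2)).
    assert (c1 : z0 <= c) by apply Rmax_l.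
    assert (c2 : zs - eps/2 <= c) by apply Rmax_r.
    assert (c3 : c < zs) by (apply Rmax_lub_lt; lra).
    assert (Pc : P c).
    { split; [|lra]. destruct zw as [a| |]; simpl in *; auto; lra. }
    assert (P0 : P z0) by (split; [exact Hz0|lra]).
    assert (hc : h c < 0) by (apply Hneg; [apply Pc|lra]).
    assert (D0 := Dge1 z0 P0).
    set (dl := - h c / D z0).
    assert (dlp : 0 < dl).
    { unfold dl. assert (0 < / D z0) by (apply Rinv_0_lt_compat; lra). unfold Rdiv. nra. }
    assert (incr : forall n, u n + dl <= u (S n)).
    { intro n. change (u (S n)) with (newton_map r h (u n)). unfold newton_map. fold D.
      pose proof (Hall n).
      assert (hle : h (u n) <= h c) by (apply hmono; [apply Pu|exact Pc|lra]).
      assert (Dle : D (u n) <= D z0) by (apply Dmono; [exact P0|apply Pu|]; 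
        assert (z0 <= u n) by (apply (seq_mono u inc 0 n); lia); lra).
      assert (Dn := Dge1 _ (Pu n)).
      assert (- h c / D z0 <= - h (u n) / D (u n)).
      { apply Rle_trans with (- h c / D (u n)).
        - unfold Rdiv. apply Rmult_le_compat_l; [lra|]. apply Rinv_le_contravar; lra.
        - unfold Rdiv. apply Rmult_le_compat_r; [|lra]. left; apply Rinv_0_lt_compat; lra. }
      fold dl in H1. unfold Rdiv in *. lra. }
    assert (lin : forall n, u 0%nat + INR n * dl <= u n).
    { induction n as [|n IH]. - simpl. lra. - rewrite S_INR. specialize (incr n). lra. }
    destruct (INR_archimed dl (zs - z0) dlp) as [n Hn].
    specialize (lin n). specialize (Pu n). destruct Pu. change (u 0%nat) with z0 in lin. lra. }
  destruct Hex as [N HN]. exists N. intros n Hn.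
  pose proof (seq_mono u inc N n Hn). destruct (Pu n).
  rewrite Rabs_left1; lra.
Qed.

Lemma opp_lt_l (a : Rbar) (x : R) : Rbar_lt (Rbar_opp a) x <-> Rbar_lt (-x) a.
Proof. destruct a as [a| |]; simpl; split; intros; auto; lra. Qed.
Lemma opp_lt_r (a : Rbar) (x : R) : Rbar_lt x (Rbar_opp a) <-> Rbar_lt a (-x).
Proof. destruct a as [a| |]; simpl; split; intros; auto; lra. Qed.
Lemma opp_oint (a b : Rbar) (x : R) : in_oint (Rbar_opp b) (Rbar_opp a) x <-> in_oint a b (-x).
Proof. unfold in_oint. rewrite opp_lt_l, opp_lt_r. tauto. Qed.

Lemma iter_refl r h z0 n :
  newton_iter (fun z => - r (- z)) (fun z => - h (- z)) (- z0) n = - newton_iter r h z0 n.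
Proof.
  induction n as [|n IH]; simpl; [reflexivity|]. rewrite IH.
  unfold newton_map, newton_den. rewrite !Ropp_involutive. unfold Rdiv.
  replace (1 + (- h (newton_iter r h z0 n)) ^ 2 - 2 * - r (newton_iter r h z0 n) * - h (newton_iter r h z0 n))
    with (1 + h (newton_iter r h z0 n) ^ 2 - 2 * r (newton_iter r h z0 n) * h (newton_iter r h z0 n)) by ring.
  ring.
Qed.

Lemma den_refl r h x : newton_den (fun z => - r (- z)) (fun z => - h (- z)) (- x) = newton_den r h x.
Proof. unfold newton_den. rewrite !Ropp_involutive. ring. Qed.

Theorem theorem3p8 (zw zw' : Rbar) (r h : R -> R) (zs : R) :
  Rbar_lt zw zw' ->
  (forall z, in_oint zw zw' z -> ex_derive r z) ->
  (forall x y, in_oint zw zw' x -> in_oint zw zw' y -> x <= y -> r y <= r x) ->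
  (forall z, in_oint zw zw' z -> is_derive h z (1 + (h z)^2 - 2 * r z * h z)) ->
  in_oint zw zw' zs -> h zs = 0 ->
  (forall z, in_oint zw zw' z -> h z = 0 -> z = zs) ->
  ((forall z : R, Rbar_lt zw z -> z < zs -> 0 < r z) ->
   forall z0 : R, Rbar_lt zw z0 -> z0 < zs ->
     (forall n, in_oint zw zw' (newton_iter r h z0 n)
                /\ newton_den r h (newton_iter r h z0 n) <> 0) /\
     (forall n, newton_iter r h z0 n <= newton_iter r h z0 (S n)) /\
     is_lim_seq (newton_iter r h z0) zs)
  /\
  ((forall z : R, zs < z -> Rbar_lt z zw' -> r z < 0) ->
   forall z0 : R, zs < z0 -> Rbar_lt z0 zw' ->
     (forall n, in_oint zw zw' (newton_iter r h z0 n)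
                /\ newton_den r h (newton_iter r h z0 n) <> 0) /\
     (forall n, newton_iter r h z0 (S n) <= newton_iter r h z0 n) /\
     is_lim_seq (newton_iter r h z0) zs).
Proof.
  intros Hlt _ Hm Hd Hzs H0 Hu.
  pose proof (h_sign zw zw' r h zs Hd Hzs H0 Hu) as Sg.
  split.
  - intros Hr z0 Hz0 Hz0s. apply (core zw zw' r h zs Hm Hd Hzs H0); auto.
    intros z Hz Hzz. apply Sg; [|exact Hzz]. split; [exact Hz|].
    destruct Hzs as [_ Hb]. destruct zw' as [b| |]; simpl in *; auto; lra.
  - intros Hr z0 Hz0 Hz0s.
    set (r' := fun z => - r (- z)). set (h' := fun z => - h (- z)).
    assert (Hin2 : forall z : R, zs < z -> Rbar_lt z zw' -> in_oint zw zw' z).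
    { intros z a b. split; [|exact b]. destruct Hzs as [Ha _].
      destruct zw as [c| |]; simpl in *; auto; lra. }
    destruct (core (Rbar_opp zw') (Rbar_opp zw) r' h' (- zs)) with (z0 := - z0)
      as [A [B C]].
    + intros x y Hx Hy Hxy. apply opp_oint in Hx, Hy. unfold r'.
      pose proof (Hm (-y) (-x) Hy Hx ltac:(lra)). lra.
    + intros z Hz. apply opp_oint in Hz.
      pose proof (is_derive_comp h (fun z => - z) z _ _ (Hd (-z) Hz)
                   (is_derive_opp (fun t => t) z _ (@is_derive_id R_AbsRing z))) as E.
      pose proof (is_derive_opp _ z _ E) as E2.
      unfold h', r'.
      replace (1 + (- h (- z)) ^ 2 - 2 * - r (- z) * - h (- z))
        with (opp (scal (opp (@one R_AbsRing)) (1 + h (- z) ^ 2 - 2 * r (- z) * h (- z)))).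
      * exact E2.
      * simpl. unfold opp, scal, one; simpl. unfold mult; simpl. ring.
    + apply opp_oint. rewrite Ropp_involutive. exact Hzs.
    + unfold h'. rewrite Ropp_involutive, H0. ring.
    + intros z Hz Hzz. apply opp_lt_l in Hz. unfold h'.
      assert (0 < h (- z)); [|lra]. apply Sg; [apply Hin2; auto; lra|lra].
    + intros z Hz Hzz. apply opp_lt_l in Hz. unfold r'.
      assert (r (- z) < 0); [|lra]. apply Hr; auto; lra.
    + apply opp_lt_l. rewrite Ropp_involutive. exact Hz0s.
    + lra.
    + unfold r', h' in *. split; [|split].
      * intro n. destruct (A n) as [A1 A2]. rewrite iter_refl in A1, A2.
        rewrite den_refl in A2. apply opp_oint in A1. rewrite !Rbar_opp_involutive in A1. split; [exact A1|exact A2].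
      * intro n. pose proof (B n) as Bn. rewrite !iter_refl in Bn. lra.
      * apply is_lim_seq_opp in C. simpl in C. rewrite Ropp_involutive in C.
        eapply is_lim_seq_ext; [|exact C].
        intro n. simpl. rewrite iter_refl. ring.
Qed.
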